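(* Let $G=(V,E)$ be a simple undirected graph with $m=|E|$ and maximum degree $\Delta$, $b:V\to\mathbb{Z}_{\ge0}$ with $\beta=\max_v b(v)$, and $f:2^E\to\mathbb{R}_{\ge0}$ a normalized monotone submodular function satisfying the local dependence assumption. Then the Local Lazy Greedy algorithm runs in $O(\beta\, m\log\Delta)$ time.
   Context: Local dependence assumption: the marginal gain $\rho_e(A)=f(A\cup\{e\})-f(A)$ of an edge $e$ depends only on the edges of $A$ sharing an endpoint with $e$. A $b$-matching is $M\subseteq E$ with $|M\cap\delta(v)|\le b(v)$ for all $v$ ($\delta(v)$ = edges incident to $v$); $v$ is saturated if equality holds and available otherwise; an edge is available w.r.t. $M$ if it is not in $M$ and both endpoints are unsaturated. Local Lazy Greedy: $M=\emptyset$; for each vertex $v$ keep a max-heap $pq(v)$ of its incident edges keyed by (possibly stale) marginal gains, initially $f(\{e\})$. While some edge not in $M$ has both endpoints available, repeat: (update step) for each available vertex $v$, perform lazy evaluation on $pq(v)$: repeatedly take the top edge, recompute its marginal gain w.r.t. $M$, discard it if unavailable, re-insert it with the new key if the new gain is less than the key of the next edge, and otherwise stop; set $pointer(v)$ to the resulting best available incident edge; (matching step) for each available vertex $u$, let $v$ be the other endpoint of $pointer(u)$; if $v$ is available and $pointer(v)=pointer(u)$, add this edge to $M$. In the implementation, the update and matching steps iterate only over vertices whose status may have changed (the endpoints of newly matched edges and their available neighbors, respectively the vertices whose pointers changed). Running time counts each marginal gain evaluation and availability check as constant time. *)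

(* Defs.v *)
From HB Require Import structures.
From mathcomp Require Import all_boot all_order all_algebra.
Set Implicit Arguments. Unset Strict Implicit. Unset Printing Implicit Defensive.
Import Order.TTheory GRing.Theory Num.Theory.
Local Open Scope ring_scope.

Section LocalLazyGreedy.
Variables (R : realFieldType) (V E : finType) (src dst : E -> V).
Variables (b : V -> nat) (f : {set E} -> R) (rank : E -> nat).

Definition delta (v : V) : {set E} := [set e | (src e == v) || (dst e == v)].
Definition simple_graph : Prop :=
  (forall e, src e != dst e) /\
  (forall e1 e2, [set src e1; dst e1] = [set src e2; dst e2] -> e1 = e2).
Definition nbr_edges (e : E) : {set E} := delta (src e) :|: delta (dst e).
Definition maxdeg : nat := (\max_(v : V) #|delta v|)%N.
Definition beta : nat := (\max_(v : V) b v)%N.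
Definition other (e : E) (u : V) : V := if src e == u then dst e else src e.

Definition rho (M : {set E}) (e : E) : R := f (e |: M) - f M.
Definition normalized : Prop := f set0 = 0.
Definition nonneg : Prop := forall A, 0 <= f A.
Definition monotone : Prop := forall A B : {set E}, A \subset B -> f A <= f B.
Definition submodular : Prop :=
  forall A B : {set E}, f (A :|: B) + f (A :&: B) <= f A + f B.
Definition local_dependence : Prop :=
  forall e A, rho A e = rho (A :&: nbr_edges e) e.

Definition saturated (M : {set E}) (v : V) : bool := #|M :&: delta v| == b v.
Definition availv (M : {set E}) (v : V) : bool := ~~ saturated M v.
Definition avail_edge (M : {set E}) (e : E) : bool :=
  [&& e \notin M, availv M (src e) & availv M (dst e)].

(* max-heaps, modelled by their contents; keys compared lexicographically
   (key, rank), rank being a fixed tie-breaking order on edges *)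
Definition keylt (x y : R * E) : bool :=
  (x.1 < y.1) || ((x.1 == y.1) && (rank x.2 < rank y.2)%N).
Fixpoint hmax (h : seq (R * E)) : option (R * E) :=
  match h with
  | [::] => None
  | x :: t => match hmax t with
              | None => Some x
              | Some y => Some (if keylt y x then x else y)
              end
  end.
(* cost of one heap operation on a heap of size s : floor(log2 s) + 1 *)
Definition hcost (h : seq (R * E)) : nat := (trunc_log 2 (size h)).+1.

(* lazy evaluation on one heap, w.r.t. matching M; returns
   (new heap, resulting pointer, cost); None = fuel exhausted *)
Fixpoint lazy_eval (n : nat) (M : {set E}) (h : seq (R * E))
  : option (seq (R * E) * option E * nat) :=
  match n with
  | 0 => None
  | n'.+1 =>
    match hmax h with
    | None => Some (h, None, 1%N)
    | Some x =>
      let h1 := rem x h in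
      let e := x.2 in
      if ~~ avail_edge M e then
        (* pop and discard: one heap op + one availability check *)
        omap (fun r => (r.1.1, r.1.2, (r.2 + hcost h + 1)%N)) (lazy_eval n' M h1)
      else
        let g := rho M e in
        match hmax h1 with
        | Some y =>
          if keylt (g, e) y then
            omap (fun r => (r.1.1, r.1.2, (r.2 + hcost h + hcost h1 + 3)%N))
                 (lazy_eval n' M ((g, e) :: h1))
          else Some ((g, e) :: h1, Some e, (hcost h + hcost h1 + 3)%N)
        | None => Some ((g, e) :: h1, Some e, (hcost h + hcost h1 + 3)%N)
        end
    end
  end.

Definition upd {T : Type} (F : V -> T) (v : V) (x : T) : V -> T :=
  fun w => if w == v then x else F w.

(* update step over the worklist us (matching M fixed);
   returns (heaps, pointers, vertices whose pointer changed, cost) *)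
Fixpoint update_step (n : nat) (M : {set E}) (pq : V -> seq (R * E))
  (ptr : V -> option E) (us : seq V)
  : option ((V -> seq (R * E)) * (V -> option E) * seq V * nat) :=
  match us with
  | [::] => Some (pq, ptr, [::], 0%N)
  | v :: us' =>
    if availv M v then
      match lazy_eval n M (pq v) with
      | None => None
      | Some (h', p, c) =>
        omap (fun r => let: (pq2, ptr2, cs, c2) := r in
                       (pq2, ptr2, (if p != ptr v then v :: cs else cs),
                        (c2 + c + 1)%N))
             (update_step n M (upd pq v h') (upd ptr v p) us')
      end
    else omap (fun r => let: (pq2, ptr2, cs, c2) := r in
                        (pq2, ptr2, cs, (c2 + 1)%N))
              (update_step n M pq ptr us')
  end.

(* matching step over the vertices whose pointer changed;
   returns (new matching, newly matched edges, cost) *)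
Fixpoint match_step (ptr : V -> option E) (M : {set E}) (cs : seq V)
  : {set E} * seq E * nat :=
  match cs with
  | [::] => (M, [::], 0%N)
  | u :: cs' =>
    let: (M1, nw) :=
      if availv M u then
        match ptr u with
        | Some e =>
          let v := other e u in
          if availv M v && (ptr v == Some e) then (e |: M, [:: e]) else (M, [::])
        | None => (M, [::])
        end
      else (M, [::]) in
    let: (M2, nw2, c) := match_step ptr M1 cs' in (M2, nw ++ nw2, (c + 3)%N)
  end.

(* next worklist: endpoints of newly matched edges and their available
   neighbours (restricted to available vertices), with scanning cost *)
Definition touched (M : {set E}) (nw : seq E) : seq V :=
  undup [seq w <- flatten [seq x :: [seq other e' x | e' <- enum (delta x)]
                          | x <- flatten [seq [:: src e; dst e] | e <- nw]]
        | availv M w].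
Definition touched_cost (nw : seq E) : nat :=
  (\sum_(e <- nw) (#|delta (src e)| + #|delta (dst e)| + 2))%N.

Fixpoint main_loop (n : nat) (M : {set E}) (pq : V -> seq (R * E))
  (ptr : V -> option E) (us : seq V) : option nat :=
  match n with
  | 0 => None
  | n'.+1 =>
    if [exists e, avail_edge M e] then
      match update_step n' M pq ptr us with
      | None => None
      | Some (pq', ptr', cs, c1) =>
        let: (M', nw, c2) := match_step ptr' M (undup cs) in
        omap (fun c => (c + 1 + c1 + c2 + touched_cost nw)%N)
             (main_loop n' M' pq' ptr' (touched M' nw))
      end
    else Some 0%N
  end.

Definition pq0 (v : V) : seq (R * E) := [seq (f [set e], e) | e <- enum (delta v)].
Definition ptr0 (v : V) : option E := None.
Definition us0 : seq V := [seq v <- enum V | (0 < #|delta v|)%N].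
Definition init_cost : nat :=
  (\sum_(v : V) #|delta v| * (2 + trunc_log 2 #|delta v|) + size us0)%N.

(* total cost of a run of Local Lazy Greedy with fuel n (None: fuel exhausted) *)
Definition llg_cost (n : nat) : option nat :=
  omap (fun c => (init_cost + c)%N) (main_loop n set0 pq0 ptr0 us0).

End LocalLazyGreedy.

(* Main.v *)
Require Import Defs.
From HB Require Import structures.
From mathcomp Require Import all_boot all_order all_algebra.
From mathcomp Require Import zify ring lra.
Import Order.TTheory GRing.Theory Num.Theory.
Local Open Scope ring_scope.
Set Implicit Arguments. Unset Strict Implicit. Unset Printing Implicit Defensive.

Section Proof.
Variables (R : realFieldType) (V E : finType) (src dst : E -> V).
Variables (b : V -> nat) (f : {set E} -> R) (rank : E -> nat).

Local Notation dl := (delta src dst).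
Local Notation avE := (avail_edge src dst b).
Local Notation avV := (availv src dst b).
Local Notation klt := (keylt rank).

Lemma klt_irr (x : R * E) : ~~ klt x x.
Proof. by rewrite /keylt ltxx ltnn andbF. Qed.

Lemma klt_trans (x y z : R * E) : klt x y -> klt y z -> klt x z.
Proof.
rewrite /keylt; case: x y z => [x1 x2] [y1 y2] [z1 z2] /=.
case/orP=> [h1|/andP[/eqP e1 r1]]; case/orP=> [h2|/andP[/eqP e2 r2]].
- by rewrite (lt_trans h1 h2).
- by rewrite -e2 h1.
- by rewrite e1 h2.
- by rewrite e1 e2 eqxx (ltn_trans r1 r2) orbT.
Qed.

Lemma klt_split (x y z : R * E) : klt x z -> klt x y || klt y z.
Proof.
rewrite /keylt; case: x y z => [x1 x2] [y1 y2] [z1 z2] /=.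
case: (ltgtP x1 y1) => [h|h|h] /=.
- by [].
- case/orP=> [h2|/andP[/eqP e2 r2]].
  + by rewrite (lt_trans h h2).
  + by rewrite -e2 h.
- subst y1; case/orP=> [h2|/andP[/eqP e2 r2]].
  + by rewrite h2 orbT.
  + subst z1; rewrite eqxx /=; case: (ltnP (rank x2) (rank y2)) => //= hh.
    by rewrite ltxx /= (leq_ltn_trans hh r2).
Qed.

Lemma hmax_None (h : seq (R * E)) : hmax rank h = None -> h = [::].
Proof. by case: h => //= x t; case: (hmax rank t). Qed.

Lemma hmax_mem (h : seq (R * E)) x : hmax rank h = Some x -> x \in h.
Proof.
elim: h x => //= y t IH x; case Ht: (hmax rank t) => [z|] [<-].
- case: ifP => _; first by rewrite mem_head.
  by rewrite in_cons (IH z Ht) orbT.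
- by rewrite mem_head.
Qed.

Lemma hmax_max (h : seq (R * E)) x : hmax rank h = Some x ->
  forall y, y \in h -> ~~ klt x y.
Proof.
elim: h x => //= y t IH x; case Ht: (hmax rank t) => [z|] [<-] w.
- have Hz := IH z Ht.
  case: ifP => hzy; rewrite in_cons => /orP[/eqP->|wt].
  + exact: klt_irr.
  + by apply/negP => hyw; move: (Hz w wt); rewrite (klt_trans hzy hyw).
  + by rewrite hzy.
  + exact: Hz.
- by rewrite (hmax_None Ht) in_cons orbF => /eqP->; exact: klt_irr.
Qed.


Hypothesis Hsimple : simple_graph src dst.
Hypothesis Hrank : injective rank.
Hypothesis Hnorm : normalized f.
Hypothesis Hsub : submodular f.
Hypothesis Hloc : local_dependence src dst f.

Local Notation nbr := (nbr_edges src dst).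

Definition LL := (trunc_log 2 (maxdeg src dst)).+1.
Definition WW := (2 * LL + 3)%N.
Definition bb := beta b.
Definition lvl (A : E -> {set E}) (x : R * E) : nat :=
  (WW * (1 + (2 * bb - #|A x.2 :&: nbr x.2|)))%N.
Definition Phi (h : seq (R * E)) (A : E -> {set E}) : nat :=
  (\sum_(x <- h) lvl A x)%N.

Definition hinv (M : {set E}) (v : V) (h : seq (R * E)) (A : E -> {set E}) : Prop :=
  [/\ uniq (map snd h),
      forall x, x \in h -> [/\ x.2 \in dl v, x.1 = rho f (A x.2) x.2 & A x.2 \subset M]
    & forall e, e \in dl v -> avE M e -> e \in map snd h].

Definition matinv (M : {set E}) := forall v, (#|M :&: dl v| <= b v)%N.

Definition pvalid (M : {set E}) (v : V) (h : seq (R * E)) (p : option E) : Prop :=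
  match p with
  | None => forall e, e \in dl v -> ~~ avE M e
  | Some e => [/\ avE M e, (rho f M e, e) \in h &
                  forall y, y \in h -> ~~ klt (rho f M e, e) y]
  end.

Lemma WW_gt0 : (0 < WW)%N. Proof. by rewrite /WW addn3. Qed.

Lemma lvl_ge (A : E -> {set E}) x : (WW <= lvl A x)%N.
Proof. by rewrite /lvl leq_pmulr. Qed.

Lemma b_le v : (b v <= bb)%N.
Proof. rewrite /bb /beta; exact: (@leq_bigmax _ b v). Qed.

Lemma deg_le v : (#|dl v| <= maxdeg src dst)%N.
Proof. rewrite /maxdeg; exact: (@leq_bigmax _ (fun v => #|dl v|) v). Qed.

Lemma nbr_card M e : matinv M -> (#|M :&: nbr e| <= 2 * bb)%N.
Proof.
move=> HM; rewrite /nbr_edges setIUr.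
apply: leq_trans (leq_card_setU _ _) _.
have := HM (src e); have := HM (dst e); have := b_le (src e); have := b_le (dst e).
lia.
Qed.

Lemma rho_loc A e : rho f A e = rho f (A :&: nbr e) e.
Proof. exact: Hloc. Qed.

Lemma hsize M v h A : hinv M v h A -> (size h <= maxdeg src dst)%N.
Proof.
case=> Hu Hm _; rewrite -(size_map snd) -(card_uniqP Hu).
apply: leq_trans (deg_le v); apply: subset_leq_card; apply/subsetP => e.
by case/mapP => x /Hm [] ? _ _ ->.
Qed.

Lemma hcost_le (h : seq (R * E)) : (size h <= maxdeg src dst)%N -> (hcost h <= LL)%N.
Proof. by move=> hs; rewrite /hcost /LL ltnS leq_trunc_log. Qed.

Lemma Phi_rem h A x : x \in h -> Phi h A = (lvl A x + Phi (rem x h) A)%N.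
Proof. by move=> xh; rewrite /Phi (perm_big _ (perm_to_rem xh)) big_cons. Qed.

Definition updA (A : E -> {set E}) (e0 : E) (M : {set E}) : E -> {set E} :=
  fun e => if e == e0 then M else A e.

Lemma hinv_rem M v h A x : hinv M v h A -> x \in h -> ~~ avE M x.2 ->
  hinv M v (rem x h) A.
Proof.
case=> Hu Hm Hc xh nav; have P := perm_to_rem xh.
have Pm := perm_map snd P.
split.
- by move: Hu; rewrite (perm_uniq Pm) /= => /andP[].
- by move=> y /mem_rem /Hm.
- move=> e ev ae; have := Hc e ev ae; rewrite (perm_mem Pm) /= in_cons.
  case/orP=> [/eqP ee|//]; by move: nav; rewrite -ee ae.
Qed.

Lemma hinv_repl M v h A x : matinv M -> hinv M v h A -> x \in h ->
  [/\ hinv M v ((rho f M x.2, x.2) :: rem x h) (updA A x.2 M),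
      (Phi ((rho f M x.2, x.2) :: rem x h) (updA A x.2 M) <= Phi h A)%N &
      ((rho f M x.2, x.2) != x ->
        (Phi ((rho f M x.2, x.2) :: rem x h) (updA A x.2 M) + WW <= Phi h A)%N)].
Proof.
move=> HM [Hu Hm Hc] xh; have P := perm_to_rem xh.
have Pm := perm_map snd P.
have Hu' : uniq (x.2 :: map snd (rem x h)) by rewrite -(perm_uniq Pm).
have nin : forall y, y \in rem x h -> (y.2 == x.2) = false.
  move=> y yr; apply/negP => /eqP ye; move: Hu' => /= /andP[] nx _.
  by move: nx; rewrite -ye (map_f snd yr).
have PhiA : Phi (rem x h) (updA A x.2 M) = Phi (rem x h) A.
  rewrite /Phi; apply: eq_big_seq => y yr; by rewrite /lvl /updA nin.
have [xv xk xA] := Hm x xh.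
have sub : A x.2 :&: nbr x.2 \subset M :&: nbr x.2 by apply: setSI.
have c1 := subset_leq_card sub.
have c2 := nbr_card x.2 HM.
have Pnew : Phi ((rho f M x.2, x.2) :: rem x h) (updA A x.2 M) =
  (lvl (updA A x.2 M) (rho f M x.2, x.2) + Phi (rem x h) A)%N.
  by rewrite -PhiA /Phi big_cons.
rewrite Pnew (Phi_rem A xh).
have lv : lvl (updA A x.2 M) (rho f M x.2, x.2) =
          (WW * (1 + (2 * bb - #|M :&: nbr x.2|)))%N by rewrite /lvl /updA /= eqxx.
split.
- split.
  + by [].
  + move=> y; rewrite in_cons => /orP[/eqP-> | yr].
    * by rewrite /updA /= eqxx.
    * have [yv yk yA] := Hm y (mem_rem yr); by rewrite /updA nin.
  + move=> e ev ae; have := Hc e ev ae; by rewrite (perm_mem Pm).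
- rewrite leq_add2r lv /lvl leq_mul2l; apply/orP; right.
  rewrite leq_add2l; exact: leq_sub2l.
- move=> ne; rewrite addnAC leq_add2r lv /lvl -mulnSr leq_mul2l; apply/orP; right.
  have pr : A x.2 :&: nbr x.2 \proper M :&: nbr x.2.
    rewrite properEneq sub andbT; apply/eqP => eqs; move/eqP: ne; apply.
    have -> : rho f M x.2 = x.1 by rewrite rho_loc -eqs -rho_loc -xk.
    by case: (x).
  have := proper_card pr; move: c2; clear; move: #|M :&: _| #|A _ :&: _| => p q; lia.
Qed.

Lemma lazy_ok n M v h A : matinv M -> hinv M v h A -> (Phi h A < n)%N ->
  exists h' p c A', lazy_eval src dst b f rank n M h = Some (h', p, c) /\
    [/\ hinv M v h' A', pvalid M v h' p & (c + Phi h' A' <= Phi h A + WW)%N].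
Proof.
move=> HM; elim: n h A => // n IH h A Hh Hn /=.
case Hx: (hmax rank h) => [x|]; last first.
  have E0 := hmax_None Hx; subst h.
  exists [::], None, 1%N, A; split => //; split => //.
  - move=> e ev; apply/negP => ae; case: Hh => _ _ Hc; by have := Hc e ev ae.
  - by have := WW_gt0; rewrite /Phi big_nil; lia.
have xh := hmax_mem Hx; have xmax := hmax_max Hx.
have Hhs := hsize Hh.
have hc1 := hcost_le Hhs.
have hc2 : (hcost (rem x h) <= LL)%N.
  by apply: hcost_le; apply: leq_trans Hhs; rewrite size_rem // leq_pred.
have lx := lvl_ge A x.
case: ifP => [nav|av].
- have Hr := hinv_rem Hh xh nav.
  have Hp := Phi_rem A xh.
  have Hn' : (Phi (rem x h) A < n)%N.
    by move: Hn lx WW_gt0; rewrite Hp; move: (lvl A x) (Phi _ A) WW => a q r; lia.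
  have [h' [p [c [A' [-> [H1 H2 H3]]]]]] := IH (rem x h) A Hr Hn'.
  exists h', p, (c + hcost h + 1)%N, A'; split => //; split => //.
  move: H3 hc1 lx; rewrite Hp /WW.
  move: (lvl A x) (Phi _ A) (Phi h' A') (hcost h) => a q r s; lia.
- have av' : avE M x.2 by rewrite -[avE M x.2]negbK av.
  have [Hr Hle Hlt] := hinv_repl HM Hh xh.
  have term : pvalid M v ((rho f M x.2, x.2) :: rem x h) (Some x.2) ->
    exists h' p c A', Some ((rho f M x.2, x.2) :: rem x h, Some x.2,
                         (hcost h + hcost (rem x h) + 3)%N) = Some (h', p, c) /\
    [/\ hinv M v h' A', pvalid M v h' p & (c + Phi h' A' <= Phi h A + WW)%N].
    move=> pv; eexists _, _, _, (updA A x.2 M); split; first reflexivity.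
    split => //; move: Hle hc1 hc2; rewrite /WW.
    move: (Phi _ _) (Phi h A) (hcost h) (hcost (rem x h)) => a q r s; lia.
  case Hy: (hmax rank (rem x h)) => [y|].
  + have ymax := hmax_max Hy; have yr := hmax_mem Hy.
    case: ifP => [lt|nlt].
    * have ne : (rho f M x.2, x.2) != x.
        apply/eqP => eqx; have := xmax y (mem_rem yr); by rewrite -eqx lt.
      have := Hlt ne => Hlt'.
      have Hn' : (Phi ((rho f M x.2, x.2) :: rem x h) (updA A x.2 M) < n)%N.
        move: Hn Hlt' WW_gt0; move: (Phi _ _) (Phi h A) WW => a q r; lia.
      have [h' [p [c [A' [-> [H1 H2 H3]]]]]] := IH _ _ Hr Hn'.
      exists h', p, (c + hcost h + hcost (rem x h) + 3)%N, A'; split => //; split => //.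
      move: H3 Hlt' hc1 hc2; rewrite /WW.
      move: (Phi _ _) (Phi h A) (Phi h' A') (hcost h) (hcost (rem x h)) => a q r s t; lia.
    * apply: term; split => //; first exact: mem_head.
      move=> z; rewrite in_cons => /orP[/eqP-> | zr]; first exact: klt_irr.
      apply/negP => lt'; case/orP: (klt_split y lt') => [h1|h2].
      - by rewrite h1 in nlt.
      - by move: (ymax z zr); rewrite h2.
  + apply: term; split => //; first exact: mem_head.
    have E0 := hmax_None Hy; rewrite E0.
    move=> z; rewrite in_cons => /orP[/eqP-> | //]; exact: klt_irr.
Qed.

Definition PhiT (pq : V -> seq (R * E)) (A : V -> E -> {set E}) : nat :=
  (\sum_v Phi (pq v) (A v))%N.
Definition hinvs M (pq : V -> seq (R * E)) (A : V -> E -> {set E}) :=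
  forall v, hinv M v (pq v) (A v).

Lemma PhiT_upd pq A v h A1 :
  (PhiT (upd pq v h) (upd A v A1) + Phi (pq v) (A v) = PhiT pq A + Phi h A1)%N.
Proof.
rewrite /PhiT (bigD1 v) //= [in RHS](bigD1 v) //= /upd eqxx.
have -> : (\sum_(i | i != v) Phi (if i == v then h else pq i) (if i == v then A1 else A i)
   = \sum_(i | i != v) Phi (pq i) (A i))%N.
  by apply: eq_bigr => i /negbTE ->.
by move: (Phi h A1) (Phi (pq v) (A v)) (\sum_(i | _) _)%N => x y z; lia.
Qed.

Lemma update_ok n M us pq ptr A : matinv M -> uniq us -> hinvs M pq A ->
  (forall v, v \in us -> Phi (pq v) (A v) < n)%N ->
  exists pq' ptr' cs c A',
    update_step src dst b f rank n M pq ptr us = Some (pq', ptr', cs, c) /\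
  hinvs M pq' A' /\
  [/\ (forall v, (v \notin us) || ~~ avV M v -> pq' v = pq v /\ ptr' v = ptr v),
      (forall v, v \in us -> avV M v -> pvalid M v (pq' v) (ptr' v)),
      (forall v, v \notin cs -> ptr' v = ptr v),
      (size cs <= size us)%N &
      (c + PhiT pq' A' <= PhiT pq A + (WW + 1) * size us)%N].
Proof.
move=> HM; elim: us pq ptr A => [|v us IH] pq ptr A Hu Hh Hn.
  exists pq, ptr, [::], 0%N, A; split => //; split => //; split => //.
  by rewrite muln0 addn0 add0n.
move: Hu => /= /andP[vn Hu].
case av: (avV M v).
- have [h' [p [c [A1 [-> [H1 H2 H3]]]]]] := lazy_ok HM (Hh v) (Hn v (mem_head _ _)).
  have Hh' : hinvs M (upd pq v h') (upd A v A1).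
    by move=> w; rewrite /upd; case: eqP => // ->.
  have Hn' : forall w, w \in us -> (Phi (upd pq v h' w) (upd A v A1 w) < n)%N.
    move=> w wu; rewrite /upd; case: eqP => [ew|_].
    + by move: vn; rewrite -ew wu.
    + by apply: Hn; rewrite in_cons wu orbT.
  have [pq2 [ptr2 [cs2 [c2 [A2 [-> [G1 [G2 G3 G4 G5 G6]]]]]]]] := IH _ (upd ptr v p) _ Hu Hh' Hn'.
  exists pq2, ptr2, (if p != ptr v then v :: cs2 else cs2), (c2 + c + 1)%N, A2.
  split => //; split => //; split => //.
  + move=> w; rewrite in_cons negb_or => /orP[/andP[wv wu]|nav].
    * have [-> ->] := G2 w (introT orP (or_introl wu)).
      by rewrite /upd (negbTE wv).
    * case: (eqVneq w v) => [ew|wv]; first by move: nav; rewrite ew av.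
      have [-> ->] := G2 w (introT orP (or_intror nav)).
      by rewrite /upd (negbTE wv).
  + move=> w; rewrite in_cons => /orP[/eqP->|wu] aw.
    * have [-> ->] := G2 v (introT orP (or_introl vn)).
      by rewrite /upd eqxx.
    * exact: G3.
  + move=> w; case: (eqVneq w v) => [->|wv].
    * case: ifP => [_|/negbFE/eqP pe]; first by rewrite mem_head.
      move=> _; have [_ ->] := G2 v (introT orP (or_introl vn)).
      by rewrite /upd eqxx pe.
    * case: ifP => _; first rewrite in_cons (negbTE wv) /=.
      - by move/G4 => ->; rewrite /upd (negbTE wv).
      - by move/G4 => ->; rewrite /upd (negbTE wv).
  + by case: ifP => _ /=; [rewrite ltnS G5 | exact: leq_trans G5 (leqnSn _)].
  + have := PhiT_upd pq A v h' A1; move: G6 H3.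
    rewrite /= mulnS.
    move: (PhiT pq2 A2) (PhiT _ _) (PhiT pq A) (Phi h' A1) (Phi (pq v) (A v)) => a q r s t.
    move: ((WW + 1) * size us)%N WW => w u; lia.
- have [pq2 [ptr2 [cs2 [c2 [A2 [-> [G1 [G2 G3 G4 G5 G6]]]]]]]] := IH pq ptr A Hu Hh
     (fun w wu => Hn w (introT orP (or_intror wu))).
  exists pq2, ptr2, cs2, (c2 + 1)%N, A2.
  split => //; split => //; split => //.
  + move=> w; rewrite in_cons negb_or => /orP[/andP[wv wu]|nav]; apply: G2.
    * by rewrite wu.
    * by rewrite nav orbT.
  + move=> w; rewrite in_cons => /orP[/eqP->|wu] aw; first by rewrite av in aw.
    exact: G3.
  + by rewrite /= (leq_trans G5).
  + move: G6; rewrite /= mulnS.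
    move: (PhiT pq2 A2) (PhiT pq A) => a q.
    move: ((WW + 1) * size us)%N WW => w u; lia.
Qed.

Local Notation oth := (other src dst).

Lemma avV_anti (M M' : {set E}) (v : V) : M \subset M' -> matinv M' -> avV M' v -> avV M v.
Proof.
rewrite /availv /saturated => sub HM'; have := HM' v.
have : (#|M :&: dl v| <= #|M' :&: dl v|)%N by apply/subset_leq_card/setSI.
move: (#|M :&: dl v|) (#|M' :&: dl v|) (b v) => x y z; lia.
Qed.

Lemma avE_anti (M M' : {set E}) (e : E) : M \subset M' -> matinv M' -> avE M' e -> avE M e.
Proof.
move=> sub HM /and3P[eM a1 a2]; apply/and3P; split.
- by apply: contra eM; apply: (subsetP sub).
- exact: avV_anti a1.
- exact: avV_anti a2.
Qed.

Lemma in_dl (e : E) (z : V) : (e \in dl z) = (src e == z) || (dst e == z).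
Proof. by rewrite /delta inE. Qed.

Lemma oth_in (e : E) (u : V) : e \in dl u -> e \in dl (oth e u).
Proof. by rewrite !in_dl /other; case: eqP => _ /=; rewrite eqxx ?orbT. Qed.

Lemma endpoints (e : E) (u z : V) : e \in dl u -> e \in dl z -> z = u \/ z = oth e u.
Proof.
rewrite !in_dl /other => hu hz; case: (eqVneq (src e) u) => [<-|ne].
- by case/orP: hz => /eqP <-; [left|right].
- have du : dst e = u by case/orP: hu => /eqP // su; rewrite su eqxx in ne.
  by case/orP: hz => /eqP <-; [right|left].
Qed.

Lemma oth_oth (e : E) (u : V) : e \in dl u -> oth e (oth e u) = u.
Proof.
case: Hsimple => sd _.
rewrite in_dl => hu; rewrite /other; case: (eqVneq (src e) u) => [su|ns].
- by rewrite (negbTE (sd e)) su.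
- rewrite eqxx; by case/orP: hu => /eqP // su; rewrite su eqxx in ns.
Qed.

Definition mstep (ptr : V -> option E) (M : {set E}) (u : V) : {set E} * seq E :=
  if avV M u then
    match ptr u with
    | Some e =>
      let v := oth e u in
      if avV M v && (ptr v == Some e) then (e |: M, [:: e]) else (M, [::])
    | None => (M, [::])
    end
  else (M, [::]).

Lemma match_cons (ptr : V -> option E) (M : {set E}) (u : V) (cs : seq V) :
  match_step src dst b ptr M (u :: cs) =
  let: (M1, nw) := mstep ptr M u in
  let: (M2, nw2, c) := match_step src dst b ptr M1 cs in (M2, nw ++ nw2, (c + 3)%N).
Proof. by []. Qed.

Lemma mstep_ok (ptr : V -> option E) (Mb M0 : {set E}) (u : V) (M1 : {set E}) (nw1 : seq E) : Mb \subset M0 -> matinv M0 ->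
  (forall u e, avV Mb u -> ptr u = Some e -> avE Mb e /\ e \in dl u) ->
  mstep ptr M0 u = (M1, nw1) ->
  [/\ M0 \subset M1, matinv M1,
      (forall e, (e \in M1) = (e \in M0) || (e \in nw1)),
      (forall e, e \in nw1 -> e \notin Mb) /\
        (forall e, count_mem e nw1 <= (e \in dl u))%N &
      (forall e, ptr u = Some e -> ptr (oth e u) = Some e -> avV M0 u ->
         avV M0 (oth e u) -> e \in M1)].
Proof.
move=> sub HM Hp; rewrite /mstep.
case au: (avV M0 u); last first.
  case=> <- <-; split => //; try (by move=> e; rewrite orbF); try (by split).
case pu: (ptr u) => [e|]; last first.
  case=> <- <-; split => //; try (by move=> e; rewrite orbF); try (by split).
  try by move=> e; rewrite pu.
have [ae eu] := Hp u e (avV_anti sub HM au) pu.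
case: ifP => [/andP[ao /eqP po]|nc]; last first.
  case=> <- <-; split => //; try (by move=> e'; rewrite orbF); try (by split).
  by move=> e' [<-] po' _ ao'; rewrite ao' po' eqxx in nc.
case=> <- <-; split.
- exact: subsetUr.
- move=> z; rewrite setIUl.
  case ez: (e \in dl z).
  + have : ([set e] :&: dl z) = [set e] by apply/setIidPl; rewrite sub1set.
    move=> ->.
    have az : avV M0 z by case: (endpoints eu ez) => ->.
    have := HM z; move: az; rewrite /availv /saturated.
    rewrite cardsU1.
    move: (#|M0 :&: dl z|) (b z) (e \notin _) => x y [] /=; lia.
  + have -> : [set e] :&: dl z = set0.
      by apply/setP => x; rewrite !inE; case: eqP => // ->; rewrite -in_dl ez.
    by rewrite set0U.
- by move=> e'; rewrite in_setU1 mem_seq1 orbC.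
- split.
  + by move=> e'; rewrite mem_seq1 => /eqP ->; case/and3P: ae.
  + by move=> e' /=; rewrite addn0; case: eqP => [<-|]; rewrite ?eu.
- by move=> e' [<-] _ _ _; exact: setU11.
Qed.

Lemma match_ok (ptr : V -> option E) (Mb : {set E}) (cs : seq V) :
  forall (M0 M' : {set E}) (nw : seq E) (c : nat), Mb \subset M0 -> matinv M0 ->
  (forall u e, avV Mb u -> ptr u = Some e -> avE Mb e /\ e \in dl u) ->
  match_step src dst b ptr M0 cs = (M', nw, c) ->
  [/\ c = (3 * size cs)%N, M0 \subset M' /\ matinv M',
      (forall e, (e \in M') = (e \in M0) || (e \in nw)),
      (forall e, e \in nw -> e \notin Mb) /\
        (forall e, count_mem e nw <= count (fun u => e \in dl u) cs)%N &
      (forall u e, u \in cs -> ptr u = Some e -> ptr (oth e u) = Some e -> avV M' u ->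
         avV M' (oth e u) -> e \in M')].
Proof.
elim: cs => [|u cs IH] M0 M' nw c sub HM Hp.
  case=> <- <- <-; split => //; try (by move=> e; rewrite orbF); try by split.
rewrite match_cons.
case E1: (mstep ptr M0 u) => [M1 nw1].
case E2: (match_step src dst b ptr M1 cs) => [[M2 nw2] c2] [<- <- <-].
have [s01 HM1 mem1 [nb1 cnt1] P4] := mstep_ok sub HM Hp E1.
have sub1 : Mb \subset M1 := subset_trans sub s01.
have [-> [s12 HM2] mem2 [nb2 cnt2] P4'] := IH M1 M2 nw2 c2 sub1 HM1 Hp E2.
split.
- by rewrite /= mulnS addnC.
- split => //; exact: subset_trans s01 s12.
- by move=> e; rewrite mem2 mem1 mem_cat orbA.
- split.
  + by move=> e; rewrite mem_cat => /orP[/nb1|/nb2].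
  + move=> e; rewrite count_cat /=; exact: leq_add (cnt1 e) (cnt2 e).
- move=> w e; rewrite in_cons => /orP[/eqP->|wc] pw po aw ao.
  + apply: (subsetP s12); apply: P4 pw po _ _.
    * exact: avV_anti (subset_trans s01 s12) HM2 aw.
    * exact: avV_anti (subset_trans s01 s12) HM2 ao.
  + exact: P4' wc pw po aw ao.
Qed.

Lemma card_dl (N : {set E}) (v : V) :
  #|N :&: dl v| = (\sum_(e in N) ((src e == v) + (dst e == v)))%N.
Proof.
case: Hsimple => sd _.
rewrite -sum1_card big_mkcond [RHS]big_mkcond /=; apply: eq_bigr => e _.
rewrite in_setI in_dl; case: (e \in N) => //=.
case: (eqVneq (src e) v) => [se|sne]; case: (eqVneq (dst e) v) => [de|dne] //=.
by have := sd e; rewrite se de eqxx.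
Qed.

Lemma sum_pt (g : V -> nat) (x : V) : (\sum_v g v * (x == v) = g x)%N.
Proof.
rewrite (bigD1 x) //= eqxx muln1 big1 ?addn0 // => v /negbTE vx.
by rewrite eq_sym vx muln0.
Qed.

Lemma sum_ends (g : V -> nat) (N : {set E}) :
  (\sum_(e in N) (g (src e) + g (dst e)) = \sum_v g v * #|N :&: dl v|)%N.
Proof.
under [RHS]eq_bigr => v _ do rewrite card_dl big_distrr /=.
rewrite exchange_big /=; apply: eq_bigr => e _.
under eq_bigr => v _ do rewrite mulnDr.
by rewrite big_split /= !sum_pt.
Qed.

Lemma submod_rho (A M : {set E}) (e : E) : A \subset M -> e \notin M ->
  rho f M e <= rho f A e.
Proof.
move=> sub eM; have := Hsub (e |: A) M.
have -> : (e |: A) :|: M = e |: M.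
  apply/setP => x; rewrite !inE; case: (x == e) => //=.
  by case xA: (x \in A) => //=; rewrite (subsetP sub x xA).
have -> : (e |: A) :&: M = A.
  apply/setP => x; rewrite !inE; case: eqP => [->|_] /=.
  - by rewrite (negbTE eM); apply/esym/negP => /(subsetP sub); rewrite (negbTE eM).
  - by case xA: (x \in A) => //=; rewrite (subsetP sub x xA).
rewrite /rho => h; lra.
Qed.

Lemma lex_contra (g k r : R) (e e' : E) : g <= k -> e' != e ->
  ~~ klt (g, e) (r, e') -> ~~ klt (r, e') (k, e) -> False.
Proof.
move=> gk ne; rewrite /keylt /= !negb_or !negb_and -!leNgt.
have rne : rank e' != rank e by apply: contra ne => /eqP /Hrank ->.
case/andP=> h1 h2; case/andP=> h3 h4.
have eg : g = r by apply/eqP; rewrite eq_le h1 andbT (le_trans gk h3).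
have ek : r = k by apply/eqP; rewrite eq_le h3 andbT (le_trans h1 gk).
move: h2 h4; rewrite eg ek eqxx /= -!leqNgt => h2 h4.
by move: rne; rewrite eqn_leq h2 h4.
Qed.

Lemma mutual_exists M pq ptr A : matinv M -> hinvs M pq A ->
  (forall v, avV M v -> pvalid M v (pq v) (ptr v)) ->
  (exists e, avE M e) ->
  exists e, [/\ avE M e, ptr (src e) = Some e & ptr (dst e) = Some e].
Proof.
move=> HM Hh Hv [e0 ae0].
case: (Hsimple) => sd _.
have avsrc : forall e, avE M e -> avV M (src e) by move=> e /and3P[].
have avdst : forall e, avE M e -> avV M (dst e) by move=> e /and3P[].
have avend : forall e v, avE M e -> e \in dl v -> avV M v.
  by move=> e v ae; rewrite in_dl => /orP[] /eqP <-; [apply: avsrc | apply: avdst].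
have ptrS : forall v, avV M v -> forall e, e \in dl v -> avE M e ->
    exists e', ptr v = Some e'.
  move=> v av e ev ae; have := Hv v av; case: (ptr v) => [e'|] // H.
  + by exists e'.
  + by have := H e ev; rewrite ae.
pose P := [seq (rho f M e, e) | e <- enum E & [exists v, avV M v && (ptr v == Some e)]].
have P_in : forall v e, avV M v -> ptr v = Some e -> (rho f M e, e) \in P.
  move=> v e av pv; apply: map_f; rewrite mem_filter mem_enum andbT.
  by apply/existsP; exists v; rewrite av pv eqxx.
have e0s : e0 \in dl (src e0) by rewrite in_dl eqxx.
have [e1 p1] := ptrS _ (avsrc _ ae0) _ e0s ae0.
case Hx: (hmax rank P) => [x|]; last first.
  by have := P_in _ _ (avsrc _ ae0) p1; rewrite (hmax_None Hx).
have xP := hmax_mem Hx; have xmax := hmax_max Hx.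
move: xP; case/mapP => es; rewrite mem_filter mem_enum andbT.
case/existsP => v /andP[av /eqP pv] xe.
have [aes ins maxs] : pvalid M v (pq v) (Some es) by rewrite -pv; exact: Hv.
have esv : es \in dl v by have [_ Hm _] := Hh v; have [] := Hm _ ins.
set w := oth es v.
have esw : es \in dl w := oth_in esv.
have aw : avV M w := avend _ _ aes esw.
have [e' pw] := ptrS _ aw _ esw aes.
have [ae' in' max'] : pvalid M w (pq w) (Some e') by rewrite -pw; exact: Hv.
have ee : e' = es.
  apply/eqP; apply/negPn/negP => ne.
  have [_ Hm Hc] := Hh w.
  have := Hc es esw aes; case/mapP => y yin yes.
  have [_ yk yA] := Hm y yin.
  have gk : rho f M es <= y.1.
    rewrite yk -yes; apply: submod_rho => //; first by rewrite yes.
    by case/and3P: aes.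
  apply: (lex_contra gk ne).
  - by rewrite -xe; apply: xmax; exact: P_in pw.
  - by have := max' y yin; case: (y) yes => y1 y2 /= <-.
rewrite ee in pw; move: pw; rewrite /w /other.
case: (eqVneq (src es) v) => [sv|nsv] pw.
- by exists es; rewrite sv pv pw.
- have dv : dst es = v.
    by move: esv; rewrite in_dl (negbTE nsv) /= => /eqP.
  by exists es; rewrite dv pv pw.
Qed.

Lemma tsize (nw : seq E) :
  size (flatten [seq x :: [seq oth e' x | e' <- enum (dl x)]
         | x <- flatten [seq [:: src e; dst e] | e <- nw]]) = touched_cost src dst nw.
Proof.
elim: nw => [|e nw IH]; first by rewrite /touched_cost big_nil.
rewrite /touched_cost big_cons -/(touched_cost src dst nw) -IH /=.
rewrite !size_cat /= !size_cat !size_map -!cardE.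
move: (size _) (#|dl (src e)|) (#|dl (dst e)|) => a x y; lia.
Qed.

Lemma touched_size (M : {set E}) (nw : seq E) :
  (size (touched src dst b M nw) <= touched_cost src dst nw)%N.
Proof.
rewrite /touched -tsize; apply: leq_trans (size_undup _) _.
by rewrite size_filter count_size.
Qed.

Lemma touched_mem (M : {set E}) (nw : seq E) (e : E) (z x : V) : e \in nw ->
  (z = src e \/ z = dst e) ->
  (x = z \/ exists2 e', e' \in dl z & x = oth e' z) -> avV M x ->
  x \in touched src dst b M nw.
Proof.
move=> en hz hx ax; rewrite /touched mem_undup mem_filter ax /=.
apply/flatten_mapP; exists z.
  by apply/flatten_mapP; exists e => //; case: hz => ->; rewrite !inE eqxx ?orbT.
case: hx => [->|[e' e'z ->]]; first exact: mem_head.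
by rewrite in_cons; apply/orP; right; apply: map_f; rewrite mem_enum.
Qed.

Lemma sum_ptE (w : E -> nat) (x : E) : (\sum_e (x == e) * w e = w x)%N.
Proof.
rewrite (bigD1 x) //= eqxx mul1n big1 ?addn0 // => v /negbTE vx.
by rewrite eq_sym vx mul0n.
Qed.

Lemma sum_seq_count (w : E -> nat) (s : seq E) :
  (\sum_(x <- s) w x = \sum_e count_mem e s * w e)%N.
Proof.
elim: s => [|x s IH]; first by rewrite big_nil big1 // => e _; rewrite mul0n.
rewrite big_cons IH /=.
under [RHS]eq_bigr => e _ do rewrite mulnDl.
by rewrite big_split /= sum_ptE.
Qed.

Lemma count_dl (e : E) (s : seq V) : uniq s -> (count (fun u => e \in dl u) s <= 2)%N.
Proof.
move=> us; rewrite -size_filter.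
have -> : 2%N = size [:: src e; dst e] by [].
apply: uniq_leq_size; first exact: filter_uniq.
move=> u; rewrite mem_filter in_dl => /andP[/orP[] /eqP <- _]; by rewrite !inE eqxx ?orbT.
Qed.

Definition wt (e : E) : nat := (#|dl (src e)| + #|dl (dst e)| + 2)%N.

Definition QQ (M : {set E}) : nat :=
  (\sum_v #|dl v| * (b v - #|M :&: dl v|) + 2 * #|~: M|)%N.

Lemma card_split (M M' : {set E}) (D : {set E}) : M \subset M' ->
  #|M' :&: D| = (#|M :&: D| + #|(M' :\: M) :&: D|)%N.
Proof.
move=> sub; rewrite -(cardsID M (M' :&: D)).
congr addn; apply: eq_card => x; rewrite !inE.
- apply/idP/idP => [/andP[/andP[_ ->] ->] // | /andP[xM ->]].
  by rewrite (subsetP sub x xM) xM.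
- by rewrite andbA.
Qed.

Lemma QQ_dec (M M' : {set E}) : M \subset M' -> matinv M' ->
  QQ M = (QQ M' + \sum_(e in M' :\: M) wt e)%N.
Proof.
move=> sub HM'; rewrite /QQ.
have Hc : #|~: M| = (#|~: M'| + #|M' :\: M|)%N.
  have h1 := cardsC M; have h2 := cardsC M'.
  have h3 := cardsID M M'.
  have e3 : M' :&: M = M by apply/setIidPr.
  rewrite e3 in h3.
  move: h1 h2 h3; move: #|M| #|~: M| #|M'| #|~: M'| #|M' :\: M| #|E| => a q r s t u; lia.
have Hs : (\sum_v #|dl v| * (b v - #|M :&: dl v|) =
   \sum_v #|dl v| * (b v - #|M' :&: dl v|) + \sum_v #|dl v| * #|(M' :\: M) :&: dl v|)%N.
  rewrite -big_split /=; apply: eq_big => // v _; rewrite -mulnDr; congr (_ * _)%N.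
  have := HM' v; rewrite (card_split _ sub).
  move: #|M :&: dl v| #|(M' :\: M) :&: dl v| (b v) => a q r; lia.
rewrite Hs Hc -(sum_ends (fun v => #|dl v|)).
have -> : (\sum_(e in M' :\: M) wt e =
   \sum_(e in M' :\: M) (#|dl (src e)| + #|dl (dst e)|) + 2 * #|M' :\: M|)%N.
  rewrite /wt big_split /= -sum1_card big_distrr /=.
  by [].
move: (\sum_(v : V) #|dl v| * (b v - #|M' :&: dl v|))%N.
move: (\sum_(e in M' :\: M) (#|dl (src e)| + #|dl (dst e)|))%N #|~: M'| #|M' :\: M| => a q r s; lia.
Qed.

Lemma tc_bound (M M' : {set E}) (nw : seq E) (cs : seq V) : uniq cs ->
  (forall e, count_mem e nw <= count (fun u => e \in dl u) cs)%N ->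
  (forall e, e \in nw -> e \in M' :\: M) ->
  (touched_cost src dst nw <= 2 * \sum_(e in M' :\: M) wt e)%N.
Proof.
move=> ucs cnt sub.
rewrite /touched_cost sum_seq_count big_distrr /= [X in (_ <= X)%N]big_mkcond /=.
apply: leq_sum => e _.
case: ifP => eN.
- rewrite /wt leq_mul2r; apply/orP; right; exact: leq_trans (cnt e) (count_dl e ucs).
- have /count_memPn -> : e \notin nw by apply/negP => /sub; rewrite eN.
  by rewrite mul0n.
Qed.

Definition KK1 := (WW + 4)%N.
Definition KK3 := (2 * (KK1 + 1))%N.
Definition Psi M pq (us : seq V) A : nat :=
  (PhiT pq A + KK1 * size us + KK3 * QQ M + #|~: M|)%N.

Definition Inv (M : {set E}) pq (ptr : V -> option E) (us : seq V) A : Prop :=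
  [/\ matinv M /\ hinvs M pq A, uniq us,
      (forall v e, ptr v = Some e -> e \in dl v),
      (forall v, avV M v -> v \notin us -> pvalid M v (pq v) (ptr v)) &
      (forall e, avE M e -> ~ (ptr (src e) = Some e /\ ptr (dst e) = Some e))].

Lemma Phi_le_PhiT pq A v : (Phi (pq v) (A v) <= PhiT pq A)%N.
Proof. by rewrite /PhiT (bigD1 v) //= leq_addr. Qed.

Lemma main_ok n : forall M pq ptr us A, Inv M pq ptr us A -> (Psi M pq us A < n)%N ->
  exists c, main_loop src dst b f rank n M pq ptr us = Some c /\ (c <= Psi M pq us A)%N.
Proof.
case: (Hsimple) => sd _.
elim: n => // n IH M pq ptr us A [[HM Hh] Hu HD Hv HN] Hn /=.
case: ifP => [/existsP [e0 ae0] | _]; last by exists 0%N.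
have e0M : e0 \in ~: M by rewrite inE; case/and3P: ae0.
have cM : (0 < #|~: M|)%N by apply/card_gt0P; exists e0.
have Hfuel : forall v, v \in us -> (Phi (pq v) (A v) < n)%N.
  move=> v _; have := Phi_le_PhiT pq A v; move: Hn cM; rewrite /Psi.
  move: (Phi _ _) (PhiT _ _) (KK1 * _)%N (KK3 * _)%N #|~: M| => a q r s t; lia.
have [pq' [ptr' [cs [c1 [A' [-> [G1 [G2 G3 G4 G5 G6]]]]]]]] := update_ok ptr HM Hu Hh Hfuel.
have V1 : forall v, avV M v -> pvalid M v (pq' v) (ptr' v).
  move=> v av; case vu: (v \in us); first exact: G3.
  have [-> ->] := G2 v (introT orP (or_introl (negbT vu))).
  by apply: Hv; rewrite ?vu.
have PD' : forall v e, ptr' v = Some e -> e \in dl v.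
  move=> v e pe; case: (boolP ((v \notin us) || ~~ avV M v)) => [h|].
    have [_ pv] := G2 v h; rewrite pv in pe; exact: HD pe.
  rewrite negb_or !negbK => /andP[vu av].
  have := G3 v vu av; rewrite pe => -[_ ein _].
  by have [_ Hm _] := G1 v; have [] := Hm _ ein.
have Hp : forall u e, avV M u -> ptr' u = Some e -> avE M e /\ e \in dl u.
  move=> u e au pu; have := V1 u au; rewrite pu => -[ae ein _]; split => //.
  exact: PD' pu.
case E2: (match_step src dst b ptr' M (undup cs)) => [[M' nw] c2].
have [c2E [sub HM'] memM [nbM cnt] P4] := match_ok (subxx M) HM Hp E2.
have osd : forall e, oth e (src e) = dst e by move=> e; rewrite /other eqxx.
have ods : forall e, oth e (dst e) = src e.
  by move=> e; rewrite /other (negbTE (sd e)).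
have NM' : forall e, avE M' e -> ~ (ptr' (src e) = Some e /\ ptr' (dst e) = Some e).
  move=> e ae [ps pd]; case/and3P: (ae) => eM' a1 a2.
  case sc: (src e \in undup cs).
    by have := P4 _ _ sc ps; rewrite osd => /(_ pd a1 a2); rewrite (negbTE eM').
  case dc: (dst e \in undup cs).
    by have := P4 _ _ dc pd; rewrite ods => /(_ ps a2 a1); rewrite (negbTE eM').
  rewrite mem_undup in sc; rewrite mem_undup in dc.
  apply: (HN e (avE_anti sub HM' ae)).
  by rewrite -(G4 _ (negbT sc)) -(G4 _ (negbT dc)).
have [es [aes ps pd]] := mutual_exists HM G1 V1 (ex_intro _ e0 ae0).
have prog : (#|~: M'| < #|~: M|)%N.
  have neq : M != M'.
    by apply/eqP => eqM; rewrite -eqM in NM'; apply: (NM' es aes).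
  have pr : M \proper M' by rewrite properEneq neq sub.
  have := proper_card pr; have := cardsC M; have := cardsC M'.
  move: #|M| #|M'| #|~: M| #|~: M'| #|E| => a q r s t; lia.
set us' := touched src dst b M' nw.
have Inv' : Inv M' pq' ptr' us' A'.
  split.
  - split => // v; have [Hu1 Hm1 Hc1] := G1 v; split => //.
    + move=> x xin; have [a1 a2 a3] := Hm1 x xin; split => //.
      exact: subset_trans a3 sub.
    + move=> e ev ae; apply: Hc1 => //; exact: avE_anti sub HM' ae.
  - exact: undup_uniq.
  - exact: PD'.
  - move=> x ax xn.
    have axM := avV_anti sub HM' ax.
    have := V1 x axM; case px: (ptr' x) => [e|]; last first.
      move=> H e ev; apply/negP => ae; have := H e ev.
      by rewrite (avE_anti sub HM' ae).
    case=> ae ein emax.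
    have ex : e \in dl x := PD' _ _ px.
    set y := oth e x.
    have ey : e \in dl y := oth_in ex.
    have yx : oth e y = x := oth_oth ex.
    have notnw : forall e'', e'' \in nw -> e'' \in dl x -> False.
      move=> e'' en ed; move/negP: xn; apply.
      apply: (touched_mem (z := x) en _ (or_introl erefl) ax).
      by move: ed; rewrite in_dl => /orP[] /eqP ->; [left|right].
    have notnwy : forall e'', e'' \in nw -> e'' \in dl y -> False.
      move=> e'' en ed; move/negP: xn; apply.
      apply: (touched_mem (z := y) en _ _ ax).
        by move: ed; rewrite in_dl => /orP[] /eqP ->; [left|right].
      by right; exists e.
    have newM : forall e'', e'' \in M' -> e'' \notin M -> e'' \in nw.
      by move=> e'' h1 h2; move: h1; rewrite memM (negbTE h2).
    have ends : forall z, e \in dl z -> z = x \/ z = y := fun z h => endpoints ex h.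
    have eM' : e \notin M'.
      apply/negP => eM'; case/and3P: ae => eM _ _.
      exact: notnw (newM e eM' eM) ex.
    have ay : avV M' y.
      apply/negP => nay.
      have ayM : avV M y.
        case/and3P: ae => _ a1 a2.
        by move: ey; rewrite in_dl => /orP[] /eqP <-.
      move: nay ayM; rewrite /availv /saturated (card_split _ sub).
      case: (posnP #|(M' :\: M) :&: dl y|) => [->|]; first by rewrite addn0 => ->.
      case/card_gt0P => e'' /setIP[/setDP[h1 h2] h3] _ _.
      exact: notnwy (newM _ h1 h2) h3.
    have ae' : avE M' e.
      apply/and3P; split => //.
      + by case: (ends (src e)); rewrite ?in_dl ?eqxx // => ->.
      + by case: (ends (dst e)); rewrite ?in_dl ?eqxx ?orbT // => ->.
    have rhoE : rho f M' e = rho f M e.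
      rewrite (rho_loc M') (rho_loc M); congr (rho f _ e).
      apply/setP => e''; rewrite !in_setI.
      case e''M: (e'' \in M); first by rewrite (subsetP sub _ e''M).
      case e''M': (e'' \in M') => //=.
      have en := newM _ e''M' (negbT e''M).
      apply/negP; rewrite /nbr_edges in_setU => /orP[] hd.
      + case: (ends (src e)); rewrite ?in_dl ?eqxx // => hz; rewrite hz in hd.
        * exact: notnw en hd.
        * exact: notnwy en hd.
      + case: (ends (dst e)); rewrite ?in_dl ?eqxx ?orbT // => hz; rewrite hz in hd.
        * exact: notnw en hd.
        * exact: notnwy en hd.
    by split => //; rewrite rhoE.
  - exact: NM'.
have Hdec := QQ_dec sub HM'.
have sN : forall e, e \in nw -> e \in M' :\: M.
  by move=> e en; rewrite inE (nbM e en) memM en orbT.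
have Htc := tc_bound (undup_uniq cs) cnt sN.
have Hus' : (size us' <= touched_cost src dst nw)%N := touched_size M' nw.
have Hc2 : (c2 <= 3 * size us)%N.
  by rewrite c2E leq_mul2l /= (leq_trans (size_undup cs) G5).
set tc := touched_cost src dst nw in Htc Hus' *.
set S := (\sum_(e in M' :\: M) wt e)%N in Hdec Htc.
have key : (1 + c1 + c2 + tc + Psi M' pq' us' A' <= Psi M pq us A)%N.
  rewrite /Psi.
  have h1 : (KK1 * size us' <= KK1 * tc)%N by rewrite leq_mul2l Hus' orbT.
  have h2 : (KK3 * QQ M = KK3 * QQ M' + KK3 * S)%N by rewrite Hdec mulnDr.
  have h3 : (KK1 * tc + tc <= KK3 * S)%N.
    rewrite -[X in (_ + X <= _)%N]mul1n -mulnDl /KK3 [(2 * _)%N]mulnC -mulnA.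
    by rewrite leq_mul2l Htc orbT.
  have h4 : (KK1 * size us = (WW + 1) * size us + 3 * size us)%N.
    by rewrite -mulnDl /KK1 -addnA.
  rewrite h2 h4; move: h1 h3 G6 Hc2 prog.
  move: (KK1 * size us')%N (KK1 * tc)%N (KK3 * S)%N ((WW + 1) * size us)%N (3 * size us)%N.
  move: (KK3 * QQ M')%N (PhiT pq' A') (PhiT pq A) #|~: M| #|~: M'| => *; lia.
have [c' [Hm Hc']] : exists c : nat, main_loop src dst b f rank n M' pq' ptr' us' = Some c /\ (c <= Psi M' pq' us' A')%N.
  apply: IH Inv' _; move: key Hn; move: (Psi M' pq' us' A') (Psi M pq us A) => *; lia.
rewrite Hm /=.
eexists; split; first reflexivity.
move: key Hc'; move: (Psi M' pq' us' A') (Psi M pq us A) => *; lia.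
Qed.

Definition A0 : V -> E -> {set E} := fun _ _ => set0.
Local Notation pq0' := (pq0 src dst f).
Local Notation us0' := (us0 src dst).

Lemma deg_sum : (\sum_v #|dl v| = 2 * #|E|)%N.
Proof.
have H := sum_ends (fun _ => 1%N) setT.
have L1 : (\sum_(e in [set: E]) (1 + 1) = 2 * #|E|)%N.
  by rewrite sum_nat_const cardsT mulnC.
have L2 : (\sum_v 1 * #|[set: E] :&: dl v| = \sum_v #|dl v|)%N.
  by apply: eq_bigr => v _; rewrite mul1n setTI.
by rewrite -L2 -H L1.
Qed.

Lemma ms0 v : map snd (pq0' v) = enum (dl v).
Proof. by rewrite /pq0; elim: (enum _) => //= e s ->. Qed.

Lemma Inv0 : Inv set0 pq0' (ptr0 E) us0' A0.
Proof.
split.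
- split.
  + by move=> v; rewrite set0I cards0.
  + move=> v; split.
    * by rewrite ms0 enum_uniq.
    * move=> x /mapP [e ein ->] /=; split.
      - by rewrite mem_enum in ein.
      - by rewrite /rho /A0 setU0 Hnorm subr0.
      - exact: sub0set.
    * by move=> e ev _; rewrite ms0 mem_enum.
- exact: filter_uniq (enum_uniq _).
- by [].
- move=> v av; rewrite /us0 mem_filter mem_enum andbT -leqNgt leqn0 => /eqP /cards0_eq H.
  by move=> e; rewrite H inE.
- by move=> e _ [].
Qed.

Lemma PhiT0 : PhiT pq0' A0 = (2 * #|E| * (WW * (1 + 2 * bb)))%N.
Proof.
rewrite /PhiT -deg_sum big_distrl /=; apply: eq_bigr => v _.
rewrite /Phi /pq0 big_map big_enum /=.
under eq_bigr => e _ do rewrite /lvl /= /A0 set0I cards0 subn0.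
by rewrite sum_nat_const.
Qed.

Lemma us0_size : (size us0' <= 2 * #|E|)%N.
Proof.
rewrite -deg_sum /us0 size_filter -sum1_count big_enum_cond /=.
rewrite big_mkcond /=; apply: leq_sum => v _.
by case: ifP => //; rewrite lt0n => /negbTE ->.
Qed.

Lemma QQ0 : (QQ set0 <= 2 * #|E| * bb + 2 * #|E|)%N.
Proof.
rewrite /QQ setC0 cardsT; apply: leq_add => //; rewrite -deg_sum big_distrl /=.
apply: leq_sum => v _; rewrite set0I cards0 subn0 leq_mul2l b_le orbT //.
Qed.

Lemma init0 : (init_cost src dst <= 2 * #|E| * (LL + 1) + 2 * #|E|)%N.
Proof.
rewrite /init_cost leq_add //; last exact: us0_size.
rewrite -deg_sum big_distrl /=; apply: leq_sum => v _.
rewrite leq_mul2l /LL; apply/orP; right.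
have := leq_trunc_log 2 (deg_le v); move: (trunc_log _ _) (trunc_log _ _) => p q; lia.
Qed.

Lemma final_bound : exists n c, llg_cost src dst b f rank n = Some c /\
  (c <= 200 * maxn 1 (beta b) * #|E| * (trunc_log 2 (maxdeg src dst)).+1)%N.
Proof.
have [c [Hm Hc]] := main_ok (n := (Psi set0 pq0' us0' A0).+1) Inv0 (ltnSn _).
exists (Psi set0 pq0' us0' A0).+1, (init_cost src dst + c)%N; split.
  by rewrite /llg_cost Hm.
apply: leq_trans (leq_add (init0) Hc) _.
rewrite /Psi PhiT0 setC0 cardsT -/LL -/bb.
have h1 : (KK1 * size us0' <= KK1 * (2 * #|E|))%N by rewrite leq_mul2l us0_size orbT.
have h2 : (KK3 * QQ set0 <= KK3 * (2 * #|E| * bb + 2 * #|E|))%N by rewrite leq_mul2l QQ0 orbT.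
move: h1 h2; rewrite /KK3 /KK1 /WW.
have hB : (bb <= maxn 1 bb)%N by rewrite leq_maxr.
have hB1 : (1 <= maxn 1 bb)%N by rewrite leq_maxl.
have hL : (1 <= LL)%N by [].
move: hB hB1 hL; move: (maxn 1 bb) (size us0') (QQ set0) #|E| LL bb => B u q m l x.
nia.
Qed.
End Proof.

Theorem lemma3 :
  exists C : nat,
  forall (R : realFieldType) (V E : finType) (src dst : E -> V)
         (b : V -> nat) (f : {set E} -> R) (rank : E -> nat),
    simple_graph src dst ->
    injective rank ->
    normalized f -> nonneg f -> monotone f -> submodular f ->
    local_dependence src dst f ->
    exists (n c : nat),
      llg_cost src dst b f rank n = Some c /\
      (c <= C * maxn 1 (beta b) * #|E| * (trunc_log 2 (maxdeg src dst)).+1)%N.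
Proof.
exists 200%N => R V E src dst b f rank Hs Hr Hn _ _ Hsub Hl.
exact: final_bound.
Qed.
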